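(* Let $G$ be a graph of girth at least $7$ with vertex order $v_1,\ldots,v_n$, let $D$ be a minimal dominating set of $G$, let $u,w\in D$ be adjacent, let $v\in P_D(u)$, and let $X_{uv}$, $D^*$, $Z_{uv}$ be as in the context. Then $X_{uv}=P_D(u)\setminus\{v\}$, and each vertex of $Z_{uv}$ has at most one neighbor in $\bigcup_{x\in X_{uv}\cup\{v\}}P_{D^*}(x)\setminus N[u]$.
   Context: Graphs are finite, simple, undirected; girth is the length of a shortest cycle. $N(x)$ is the open and $N[x]=N(x)\cup\{x\}$ the closed neighborhood, $N[S]=\bigcup_{x\in S}N[x]$. A dominating set is $D\subseteq V(G)$ with $N[D]=V(G)$; minimal if no proper subset is dominating. For a dominating set $D$ and $x\in D$, a vertex $y$ is private for $x$ if $y\in N[x]\setminus N[D\setminus\{x\}]$; $P_D[x]$ is the set of such $y$ and $P_D(x)=P_D[x]\cap N(x)$. Fix an order $v_1,\ldots,v_n$ of $V(G)$. Greedy removal from a dominating set $D'$: while the current set $S$ is not a minimal dominating set, remove from $S$ the vertex $v_i$ of smallest index such that $S\setminus\{v_i\}$ is still dominating. Given $D,u,v$: $X_{uv}$ is built by starting from $\emptyset$ and repeatedly adding the smallest-index vertex of $P_D(u)\setminus N[\{v\}\cup X_{uv}]$ while this set is nonempty. Let $D'=(D\setminus\{u\})\cup X_{uv}\cup\{v\}$, let $D^*$ be the result of greedy removal from $D'$, and $Z_{uv}=D'\setminus D^*$. *)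

(* Defs.v *)
(* Vertices are 'I_n; the vertex order v_1,...,v_n is the
   natural order of ordinals (v_{i+1} = ordinal i). *)
From mathcomp Require Import all_boot.
Set Implicit Arguments. Unset Strict Implicit. Unset Printing Implicit Defensive.

Section Defs.
Variable n : nat.
Variable e : rel 'I_n.

Definition simple_graph := symmetric e /\ irreflexive e.

Definition girth_ge (g : nat) :=
  forall s : seq 'I_n, uniq s -> 3 <= size s -> cycle e s -> g <= size s.

Definition onbhd (x : 'I_n) : {set 'I_n} := [set y | e x y].
Definition cnbhd (x : 'I_n) : {set 'I_n} := x |: onbhd x.
Definition cnbhdS (S : {set 'I_n}) : {set 'I_n} := \bigcup_(x in S) cnbhd x.

Definition dominating (D : {set 'I_n}) := cnbhdS D == [set: 'I_n].
Definition minimal_dominating (D : {set 'I_n}) :=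
  dominating D /\ forall S : {set 'I_n}, S \proper D -> ~~ dominating S.

Definition priv_closed (D : {set 'I_n}) (x : 'I_n) : {set 'I_n} :=
  cnbhd x :\: cnbhdS (D :\ x).
Definition priv_open (D : {set 'I_n}) (x : 'I_n) : {set 'I_n} :=
  priv_closed D x :&: onbhd x.

Definition min_elt (A : {set 'I_n}) : option 'I_n :=
  ohead [seq i <- enum 'I_n | i \in A].

Definition greedy_step (S : {set 'I_n}) : {set 'I_n} :=
  match min_elt [set x in S | dominating (S :\ x)] with
  | Some x => S :\ x
  | None => S
  end.
(* greedy removal; n iterations suffice since each effective step removes
   a vertex, and once no vertex is removable the step is the identity *)
Definition greedy_removal (S : {set 'I_n}) : {set 'I_n} := iter n greedy_step S.

Definition X_step (D : {set 'I_n}) (u v : 'I_n) (X : {set 'I_n}) :=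
  match min_elt (priv_open D u :\: cnbhdS (v |: X)) with
  | Some y => y |: X
  | None => X
  end.
Definition X_uv (D : {set 'I_n}) (u v : 'I_n) : {set 'I_n} :=
  iter n (X_step D u v) set0.

Definition D' (D : {set 'I_n}) (u v : 'I_n) : {set 'I_n} :=
  ((D :\ u) :|: X_uv D u v) :|: [set v].
Definition Dstar (D : {set 'I_n}) (u v : 'I_n) : {set 'I_n} :=
  greedy_removal (D' D u v).
Definition Z_uv (D : {set 'I_n}) (u v : 'I_n) : {set 'I_n} :=
  D' D u v :\: Dstar D u v.

End Defs.

(* Main.v *)
Require Import Defs.
From mathcomp Require Import all_boot.
Set Implicit Arguments. Unset Strict Implicit. Unset Printing Implicit Defensive.

Section L.
Variable n : nat.
Variable e : rel 'I_n.
Hypothesis Hsym : symmetric e.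
Hypothesis Hirr : irreflexive e.
Hypothesis Hg : girth_ge e 7.

Lemma edge_neq x y : e x y -> x != y.
Proof. by move=> h; apply/eqP=> E; rewrite E Hirr in h. Qed.

Lemma no_c3 a b c : e a b -> e b c -> e c a -> a != b -> a != c -> b != c -> False.
Proof.
move=> h1 h2 h3 n1 n2 n3.
have := Hg (s := [:: a; b; c]).
rewrite /= !inE !negb_or n1 n2 n3 h1 h2 h3.
by move=> /(_ isT isT isT).
Qed.

Lemma no_c4 a b c d : e a b -> e b c -> e c d -> e d a ->
  a != b -> a != c -> a != d -> b != c -> b != d -> c != d -> False.
Proof.
move=> h1 h2 h3 h4 n1 n2 n3 n4 n5 n6.
have := Hg (s := [:: a; b; c; d]).
rewrite /= !inE !negb_or n1 n2 n3 n4 n5 n6 h1 h2 h3 h4.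
by move=> /(_ isT isT isT).
Qed.

Lemma no_c6 a b c d f g : e a b -> e b c -> e c d -> e d f -> e f g -> e g a ->
  a != b -> a != c -> a != d -> a != f -> a != g ->
  b != c -> b != d -> b != f -> b != g ->
  c != d -> c != f -> c != g -> d != f -> d != g -> f != g -> False.
Proof.
move=> h1 h2 h3 h4 h5 h6 n1 n2 n3 n4 n5 n6 n7 n8 n9 n10 n11 n12 n13 n14 n15.
have := Hg (s := [:: a; b; c; d; f; g]).
rewrite /= !inE !negb_or n1 n2 n3 n4 n5 n6 n7 n8 n9 n10 n11 n12 n13 n14 n15
  h1 h2 h3 h4 h5 h6.
by move=> /(_ isT isT isT).
Qed.

Lemma min_eltS (A : {set 'I_n}) y : min_elt A = Some y -> y \in A.
Proof.
rewrite /min_elt; case E: [seq i <- enum 'I_n | i \in A] => [|x s] //= H.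
case: H => <-.
have : x \in [seq i <- enum 'I_n | i \in A] by rewrite E inE eqxx.
by rewrite mem_filter => /andP[].
Qed.

Lemma min_eltN (A : {set 'I_n}) : min_elt A = None -> A = set0.
Proof.
rewrite /min_elt; case E: [seq i <- enum 'I_n | i \in A] => [|x s] //= _.
apply/setP=> y; rewrite inE; apply/negbTE/negP=> yA.
have : y \in [seq i <- enum 'I_n | i \in A] by rewrite mem_filter yA mem_enum.
by rewrite E.
Qed.

Lemma priv_open_edge (D : {set 'I_n}) u y : y \in priv_open e D u -> e u y.
Proof. by rewrite /priv_open !inE => /andP[]. Qed.

Lemma cnbhdS_P (D : {set 'I_n}) u (X : {set 'I_n}) y :
  X \subset priv_open e D u -> y \in priv_open e D u ->
  (y \in cnbhdS e X) = (y \in X).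
Proof.
move=> sX yP; apply/bigcupP/idP.
  case=> x xX; rewrite /cnbhd !inE => /orP[/eqP -> //|exy].
  have xP := subsetP sX x xX.
  have ux := priv_open_edge xP; have uy := priv_open_edge yP.
  have [xy|nxy] := eqVneq x y; first by rewrite -xy.
  exfalso; apply: (no_c3 ux exy); first by rewrite Hsym.
  - exact: edge_neq ux.
  - exact: edge_neq uy.
  - exact: nxy.
move=> yX; exists y => //; by rewrite /cnbhd !inE eqxx.
Qed.

Lemma Xstep_inv (D : {set 'I_n}) u v k :
  v \in priv_open e D u ->
  let Q := priv_open e D u :\ v in
  let X := iter k (X_step e D u v) set0 in
  X \subset Q /\ (X = Q \/ k <= #|X|).
Proof.
move=> vP Q; elim: k => [|k IH] /=.
  by split; [exact: sub0set | right].
case: IH => sX IH.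
have sXP : v |: iter k (X_step e D u v) set0 \subset priv_open e D u.
  apply/subsetP=> x; rewrite in_setU1; case/orP=> [/eqP -> //|xX].
  by have := subsetP sX x xX; rewrite !inE => /andP[].
have E : priv_open e D u :\: cnbhdS e (v |: iter k (X_step e D u v) set0)
         = Q :\: iter k (X_step e D u v) set0.
  apply/setP=> y; rewrite /Q !in_setD in_set1.
  case yP: (y \in priv_open e D u); last by rewrite !andbF.
  by rewrite (cnbhdS_P sXP yP) in_setU1 negb_or !andbT andbC.
rewrite /X_step E.
case M: min_elt => [y|].
  have := min_eltS M; rewrite inE => /andP[yX yQ].
  split.
    apply/subsetP=> x; rewrite in_setU1; case/orP=> [/eqP -> //|]; apply: (subsetP sX).
  right; rewrite cardsU1 yX /= add1n ltnS.
  case: IH => [EQ|//]; by move: yX; rewrite EQ yQ.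
split=> //; left; apply/eqP; rewrite eqEsubset sX /=.
have := min_eltN M => /setP H; apply/subsetP=> x xQ.
by have := H x; rewrite in_setD xQ andbT in_set0 => /negbFE.
Qed.

Lemma X_uv_eq (D : {set 'I_n}) u v :
  v \in priv_open e D u -> X_uv e D u v = priv_open e D u :\ v.
Proof.
move=> vP; have [sX [//|cX]] := Xstep_inv n vP.
apply/eqP; rewrite eqEcard sX /=.
apply: leq_trans _ cX; apply: leq_trans (max_card _) _; by rewrite card_ord.
Qed.

Lemma greedy_inv k (S : {set 'I_n}) : dominating e S ->
  dominating e (iter k (greedy_step e) S) /\ iter k (greedy_step e) S \subset S.
Proof.
move=> dS; elim: k => [|k [dk sk]] /=; first by split.
rewrite /greedy_step; case M: min_elt => [x|]; last by split.
have := min_eltS M; rewrite inE => /andP[_ dx]; split=> //.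
by apply: subset_trans sk; apply: subD1set.
Qed.

Lemma D'_dom (D : {set 'I_n}) u w v :
  minimal_dominating e D -> w \in D -> e u w -> v \in priv_open e D u ->
  dominating e (D' e D u v).
Proof.
move=> [dD _] wD euw vP; apply/eqP/setP=> y; rewrite inE.
have : y \in cnbhdS e D by rewrite (eqP dD) inE.
case/bigcupP=> d dD' yd.
have inD' x : x \in D' e D u v -> y \in cnbhd e x -> y \in cnbhdS e (D' e D u v).
  by move=> xD yx; apply/bigcupP; exists x.
have [du|ndu] := eqVneq d u; last first.
  by apply: (inD' d) yd; rewrite /D' !in_setU in_setD1 ndu dD'.
case yS: (y \in cnbhdS e (D :\ u)).
  case/bigcupP: yS => d' d'D yd'; apply: (inD' d') yd'.
  by rewrite /D' !in_setU d'D.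
have [yu|nyu] := eqVneq y u.
  apply: (inD' w); last by rewrite /cnbhd yu !inE Hsym euw orbT.
  by rewrite /D' !in_setU in_setD1 wD eq_sym (edge_neq euw).
have yP : y \in priv_open e D u.
  move: yd; rewrite du /priv_open /priv_closed /cnbhd !inE yS (negbTE nyu) /=.
  by move=> ->.
apply: (inD' y); last by rewrite /cnbhd !inE eqxx.
rewrite /D' (X_uv_eq vP) !in_setU !in_setD1 in_set1 yP andbT.
by case: (y == v); rewrite ?orbT.
Qed.

Lemma main_sec (D : {set 'I_n}) (u w v : 'I_n) :
  minimal_dominating e D ->
  u \in D -> w \in D -> e u w ->
  v \in priv_open e D u ->
  X_uv e D u v = priv_open e D u :\ v /\
  forall z, z \in Z_uv e D u v ->
    #| onbhd e z :&:
       ((\bigcup_(x in v |: X_uv e D u v) priv_open e (Dstar e D u v) x)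
          :\: cnbhd e u) | <= 1.
Proof.
move=> mD uD wD euw vP.
have XE := X_uv_eq vP.
split=> // z zZ.
have dD' := D'_dom mD wD euw vP.
have [dS sS] := greedy_inv n dD'.
rewrite -/(greedy_removal e (D' e D u v)) -/(Dstar e D u v) in dS sS.
move: zZ; rewrite /Z_uv in_setD => /andP[zS zD'].
have uD' : u \notin D' e D u v.
  rewrite /D' XE !in_setU !in_setD1 in_set1 eqxx /= negb_or.
  rewrite (edge_neq (priv_open_edge vP)) andbT /=.
  by apply/negP=> /priv_open_edge; rewrite Hirr.
have uz : u != z by apply/eqP=> E; rewrite -E in zD'; rewrite zD' in uD'.
rewrite leqNgt; apply/negP=> /card_gt1P [a [b [aA bA ab]]].
have info c : c \in onbhd e z :&:
       ((\bigcup_(x in v |: X_uv e D u v) priv_open e (Dstar e D u v) x)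
          :\: cnbhd e u) ->
  exists x, [/\ e z c, c != u, ~~ e u c & e u x] /\ [/\ e x c, x \in Dstar e D u v &
    forall y, y \in Dstar e D u v -> y != x -> (c != y) && ~~ e y c].
  rewrite in_setI in_setD => /andP[cz /andP[cu /bigcupP[x xP cx]]].
  have xP' : x \in priv_open e D u by move: xP; rewrite XE setD1K.
  move: cu; rewrite /cnbhd in_setU1 /onbhd inE negb_or => /andP[cu ecu].
  move: cz; rewrite /onbhd inE => ezc.
  have exc : e x c by move: cx; rewrite /priv_open in_setI => /andP[_]; rewrite /onbhd inE.
  have cnot : c \notin cnbhdS e (Dstar e D u v :\ x).
    by move: cx; rewrite /priv_open /priv_closed !in_setI in_setD => /andP[/andP[]].
  have xS : x \in Dstar e D u v.
    apply/negPn/negP=> xS; move: cnot; rewrite (setDidPl _) ?(eqP dS) ?inE //.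
    by rewrite disjoint_sym disjoints1.
  have eux := priv_open_edge xP'.
  exists x; split; split=> // y yS yx.
  have : c \notin cnbhd e y.
    by apply: contra cnot => cy; apply/bigcupP; exists y; rewrite // in_setD1 yx.
  by rewrite /cnbhd in_setU1 /onbhd inE negb_or.
case: (info a aA) => x1 [[eza au eua eux1] [ex1a x1S Ha]].
case: (info b bA) => x2 [[ezb bu eub eux2] [ex2b x2S Hb]].
have zx1 : z != x1 by apply: contraNneq zS => ->.
have zx2 : z != x2 by apply: contraNneq zS => ->.
have [E12|n12] := eqVneq x1 x2.
  subst x2.
  apply: (no_c4 (a := z) (b := a) (c := x1) (d := b)) => //.
  - by rewrite Hsym.
  - by rewrite Hsym.
  - exact: edge_neq eza.
  - exact: edge_neq ezb.
  - by rewrite eq_sym; apply: edge_neq.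
  - by apply: edge_neq.
have /andP[bx1 ex1b] := Hb x1 x1S n12.
have n21 : x2 != x1 by rewrite eq_sym.
have /andP[ax2 ex2a] := Ha x2 x2S n21.
apply: (no_c6 (a := u) (b := x1) (c := a) (d := z) (f := b) (g := x2)) => //.
- by rewrite Hsym.
- by rewrite Hsym.
- by rewrite Hsym.
- exact: edge_neq eux1.
- by rewrite eq_sym.
- by rewrite eq_sym.
- exact: edge_neq eux2.
- exact: edge_neq ex1a.
- by rewrite eq_sym.
- by rewrite eq_sym.
- by rewrite eq_sym (edge_neq eza).
- exact: edge_neq ezb.
- by rewrite eq_sym (edge_neq ex2b).
Qed.

End L.

Theorem lemma10 (n : nat) (e : rel 'I_n) (D : {set 'I_n}) (u w v : 'I_n) :
  simple_graph e -> girth_ge e 7 ->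
  minimal_dominating e D ->
  u \in D -> w \in D -> e u w ->
  v \in priv_open e D u ->
  X_uv e D u v = priv_open e D u :\ v /\
  forall z, z \in Z_uv e D u v ->
    #| onbhd e z :&:
       ((\bigcup_(x in v |: X_uv e D u v) priv_open e (Dstar e D u v) x)
          :\: cnbhd e u) | <= 1.
Proof.
move=> [Hs Hi] Hg; exact: main_sec.
Qed.
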